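(* Let $v_1,v_2$ be two vertices of $\mathscr{BG}_+(n)$ with associated collections $\mathscr{D}_1,\mathscr{D}_2$, such that $\bigcap\mathscr{D}_1=\{i\}=\bigcap\mathscr{D}_2$ for some $i\in N$. Then $v_1$ and $v_2$ are adjacent if and only if either $\mathscr{D}_1\subseteq\mathscr{D}_2$ or $\mathscr{D}_2\subseteq\mathscr{D}_1$, and $|\mathscr{D}_1\,\Delta\,\mathscr{D}_2|=1$.
   Context: $N=\{1,\ldots,n\}$; a game is a map $v:2^N\to\mathbb{R}$ with $v(\varnothing)=0$. $\mathscr{BG}_+(n)$ is the polytope (in $\mathbb{R}^{2^N\setminus\{\varnothing,N\}}$) of games with $v\geqslant0$, $v(N)=1$ and nonempty core $C(v)=\{x\in\mathbb{R}^N:\sum_{i\in S}x_i\geqslant v(S)\ \forall S,\ \sum_{i\in N}x_i=v(N)\}$. The collection associated to a vertex $v$ is $\mathscr{D}=\{S:\varnothing\neq S\subsetneq N,\ v(S)=1\}$, and $\bigcap\mathscr{D}$ denotes the intersection of its members. Two vertices are adjacent if they lie on a common edge of the polytope. $\Delta$ is symmetric difference. *)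

(* Defs.v *)
From HB Require Import structures.
From mathcomp Require Import all_boot all_order all_algebra.
Set Implicit Arguments. Unset Strict Implicit. Unset Printing Implicit Defensive.
Import Order.TTheory GRing.Theory Num.Theory.
Local Open Scope ring_scope.

(* A game on N = 'I_n : a function on subsets of N (value on set0 must be 0). *)
Definition game (R : realFieldType) (n : nat) := {ffun {set 'I_n} -> R}.

Definition in_core (R : realFieldType) (n : nat) (v : game R n) (x : 'I_n -> R) :=
  (forall S : {set 'I_n}, v S <= \sum_(i in S) x i) /\ \sum_(i : 'I_n) x i = v setT.

Definition core_nonempty (R : realFieldType) (n : nat) (v : game R n) :=
  exists x : 'I_n -> R, in_core v x.

(* The polytope BG_+(n). Coordinates on set0 and setT are fixed (0 and 1),
   so the polytope is identified with its image in R^{2^N \ {set0, N}}. *)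
Definition BGplus (R : realFieldType) (n : nat) (v : game R n) : Prop :=
  v set0 = 0 /\ v setT = 1 /\ (forall S, 0 <= v S) /\ core_nonempty v.

Definition lin (R : realFieldType) (n : nat) (c v : game R n) : R :=
  \sum_(S : {set 'I_n}) c S * v S.

Definition is_face (R : realFieldType) (n : nat) (F : game R n -> Prop) : Prop :=
  exists c : game R n,
    forall x, F x <-> (BGplus x /\ forall y, BGplus y -> lin c y <= lin c x).

Definition is_vertex (R : realFieldType) (n : nat) (v : game R n) : Prop :=
  is_face (fun x => x = v).

Definition segment (R : realFieldType) (n : nat) (v1 v2 : game R n) (x : game R n) : Prop :=
  exists2 t : R, 0 <= t <= 1 & x = [ffun S => (1 - t) * v1 S + t * v2 S].

Definition adjacent (R : realFieldType) (n : nat) (v1 v2 : game R n) : Prop :=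
  v1 <> v2 /\ is_face (segment v1 v2).

Definition coll (R : realFieldType) (n : nat) (v : game R n) : {set {set 'I_n}} :=
  [set S : {set 'I_n} | (S != set0) && (S != setT) && (v S == 1)].

Definition bigcap_coll (n : nat) (D : {set {set 'I_n}}) : {set 'I_n} :=
  \bigcap_(S in D) S.

Definition symdiff (T : finType) (A B : {set T}) : {set T} := (A :\: B) :|: (B :\: A).

(* Main.v *)
Require Import Defs.
From mathcomp Require Import all_boot all_order all_algebra.
From mathcomp Require Import ring lra.
Import Order.TTheory GRing.Theory Num.Theory.
Set Implicit Arguments. Unset Strict Implicit.
Local Open Scope ring_scope.

Lemma maxex (R : realFieldType) n (i : 'I_n) (f : 'I_n -> R) :
  exists j, forall k, f k <= f j.
Proof.
have [j _ H] := @arg_maxP _ R 'I_n i (fun _ => true) f isT.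
by exists j => k; apply: H.
Qed.

Lemma sum_delta (R : realFieldType) n (j : 'I_n) (S : {set 'I_n}) :
  \sum_(k in S) ((k == j)%:R : R) = (j \in S)%:R.
Proof.
case: (boolP (j \in S)) => jS.
  rewrite (bigD1 j) //= eqxx big1 ?addr0 // => k /andP[_ /negbTE ->] //.
rewrite big1 // => k kS; case: eqP => // kj; by rewrite -kj kS in jS.
Qed.

Lemma sum_delta_all (R : realFieldType) n (j : 'I_n) :
  \sum_(k : 'I_n) ((k == j)%:R : R) = 1.
Proof.
rewrite (bigD1 j) //= eqxx big1 ?addr0 // => k /negbTE -> //.
Qed.

Lemma BG_bounds (R : realFieldType) n (v : game R n) :
  BGplus v -> forall S, 0 <= v S <= 1.
Proof.
move=> [v0 [vT [vpos [x [Hx Hs]]]]] S.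
rewrite vpos /=.
have xpos k : 0 <= x k.
  by apply: le_trans (vpos [set k]) _; have := Hx [set k]; rewrite big_set1.
apply: le_trans (Hx S) _.
rewrite -vT -Hs [X in _ <= X](bigID (fun k => k \in S)) /= lerDl sumr_ge0 //.
Qed.

Lemma BG_i (R : realFieldType) n (i : 'I_n) (w : game R n) :
  w set0 = 0 -> w setT = 1 -> (forall S, 0 <= w S <= 1) ->
  (forall S, S != setT -> 0 < w S -> i \in S) -> BGplus w.
Proof.
move=> w0 wT wb wi; split=> //; split=> //; split.
  by move=> S; case/andP: (wb S).
exists (fun k => (k == i)%:R); split; last by rewrite sum_delta_all wT.
move=> S; rewrite sum_delta.
case: (boolP (S == setT)) => [/eqP -> | ST]; first by rewrite in_setT wT.
case: (boolP (i \in S)) => iS /=; first by case/andP: (wb S).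
case/andP: (wb S) => w0S _; rewrite le_eqVlt in w0S.
case/orP: w0S => [/eqP <- // | /(wi _ ST) iS']; by rewrite iS' in iS.
Qed.

Lemma vertex01 (R : realFieldType) n (i : 'I_n) (v : game R n) :
  is_vertex v -> BGplus v /\ forall S, v S = 0 \/ v S = 1.
Proof.
move=> [c Hc].
have [Bv Mv] := (Hc v).1 erefl.
split=> //.
pose cp S := if 0 < c S then c S else 0.
have cp0 S : 0 <= cp S by rewrite /cp; case: ifP => // /ltW.
pose Phi k := \sum_(S | (S != setT) && (k \in S)) cp S.
have [j0 Hj0] := maxex i Phi.
have bound : forall y, BGplus y -> lin c y <= c setT + Phi j0.
  move=> y By; have yb := BG_bounds By.
  case: By => [y0 [yT [ypos [x [Hx Hs]]]]].
  rewrite /lin (bigD1 setT) //= yT mulr1 lerD2l.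
  apply: (@le_trans _ _ (\sum_(S | S != setT) cp S * \sum_(k in S) x k)).
    apply: ler_sum => S _.
    apply: (@le_trans _ _ (cp S * y S)).
      rewrite /cp; case: ifP => // /negbT; rewrite -leNgt => cS.
      by rewrite mul0r mulr_le0_ge0 //; case/andP: (yb S).
    by rewrite ler_wpM2l.
  have xpos k : 0 <= x k.
    by apply: le_trans (ypos [set k]) _; have := Hx [set k]; rewrite big_set1.
  apply: (@le_trans _ _ (\sum_k x k * Phi k)).
    rewrite le_eqVlt; apply/orP; left; apply/eqP.
    under eq_bigr => S _ do rewrite big_distrr big_mkcond /=.
    rewrite exchange_big /=.
    apply: eq_bigr => k _; rewrite /Phi big_distrr /= big_mkcond [in RHS]big_mkcond /=.
    apply: eq_bigr => S _; case: (S != setT); case: (k \in S); rewrite ?mulr0 //= mulrC //.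
  apply: (@le_trans _ _ (\sum_k x k * Phi j0)).
    by apply: ler_sum => k _; rewrite ler_wpM2l.
  by rewrite -big_distrl /= Hs yT mul1r.
pose u : game R n := [ffun S => if S == setT then 1
                                else if (j0 \in S) && (0 < c S) then 1 else 0].
have Bu : BGplus u.
  apply: (@BG_i _ _ j0).
  - rewrite ffunE; case: ifP => [/eqP h| _]; last by rewrite in_set0.
    by have := in_setT j0; rewrite -h in_set0.
  - by rewrite ffunE eqxx.
  - by move=> S; rewrite ffunE; case: ifP => _; [|case: ifP => _]; rewrite ?lexx ?ler01.
  - move=> S /negbTE ST; rewrite ffunE ST; case: ifP; first by case/andP.
    by rewrite ltxx.
have Mu : lin c u = c setT + Phi j0.
  rewrite /lin (bigD1 setT) //= ffunE eqxx mulr1; congr (_ + _).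
  rewrite /Phi [in RHS]big_mkcond /= [in LHS]big_mkcond /=.
  apply: eq_bigr => S _; rewrite ffunE; case: (boolP (S == setT)) => [/eqP ->|ST]; first by [].

  rewrite /= /cp; case: (j0 \in S); case: (0 < c S); by rewrite ?mulr1 ?mulr0.
have uv : u = v.
  apply/(Hc u).2; split=> // y By; rewrite Mu; exact: bound.
move=> S; rewrite -uv ffunE; case: ifP => _; [by right|].
by case: ifP => _; [right|left].
Qed.

Lemma vrep (R : realFieldType) n (i : 'I_n) (v : game R n) : is_vertex v ->
  forall S, v S = if S == setT then 1 else (S \in coll v)%:R.
Proof.
move=> /(vertex01 i) [[v0 [vT _]] H01] S.
case: (boolP (S == setT)) => [/eqP -> // | ST].
rewrite /coll inE ST andbT.
case: (boolP (S == set0)) => [/eqP -> // | S0] /=.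
by case: (H01 S) => ->; rewrite ?eqxx // eq_sym oner_eq0.
Qed.

Lemma coll_i n (R : realFieldType) (v : game R n) (i : 'I_n) S :
  bigcap_coll (coll v) = [set i] -> S \in coll v -> i \in S.
Proof.
move=> h SD; have : i \in bigcap_coll (coll v) by rewrite h set11.
by move/bigcapP; apply.
Qed.

Lemma coll_nT n (R : realFieldType) (v : game R n) S : S \in coll v -> S != setT.
Proof. by rewrite /coll inE => /andP[/andP[]]. Qed.

Lemma memsd (T : finType) (A B : {set T}) x :
  (x \in symdiff A B) = ((x \in A) != (x \in B)).
Proof. by rewrite /symdiff !inE; case: (x \in A); case: (x \in B). Qed.

Lemma mixBG (R : realFieldType) n (i : 'I_n) (v1 v2 w : game R n) :
  is_vertex v1 -> is_vertex v2 ->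
  bigcap_coll (coll v1) = [set i] -> bigcap_coll (coll v2) = [set i] ->
  w set0 = 0 -> w setT = 1 -> (forall S, 0 <= w S <= 1) ->
  (forall S, 0 < w S -> 0 < v1 S \/ 0 < v2 S) -> BGplus w.
Proof.
move=> V1 V2 h1 h2 w0 wT wb wp; apply: (@BG_i _ _ i) => // S ST /wp [].
  rewrite (vrep i V1) (negbTE ST); case: (boolP (S \in coll v1)) => [|_]; last by rewrite ltxx.
  by move=> /(coll_i h1).
rewrite (vrep i V2) (negbTE ST); case: (boolP (S \in coll v2)) => [|_]; last by rewrite ltxx.
by move=> /(coll_i h2).
Qed.
Unset Implicit Arguments.

Theorem theorem13 (R : realFieldType) (n : nat) (v1 v2 : game R n) (i : 'I_n) :
  is_vertex v1 -> is_vertex v2 ->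
  bigcap_coll (coll v1) = [set i] -> bigcap_coll (coll v2) = [set i] ->
  (adjacent v1 v2 <->
     ((coll v1 \subset coll v2) || (coll v2 \subset coll v1)) /\
     #|symdiff (coll v1) (coll v2)| = 1%N).
Proof.
move=> V1 V2 h1 h2.
have [B1 z1] := vertex01 i V1.
have [B2 z2] := vertex01 i V2.
have r1 := vrep i V1; have r2 := vrep i V2.
have sdT S : S \in symdiff (coll v1) (coll v2) -> S != setT.
  rewrite memsd; case: (boolP (S \in coll v1)) => [/coll_nT //|_].
  by case: (boolP (S \in coll v2)) => [/coll_nT //|_].
have diffA S : S \in symdiff (coll v1) (coll v2) ->
    (v1 S = 1 /\ v2 S = 0) \/ (v1 S = 0 /\ v2 S = 1).
  move=> SD; rewrite r1 r2 (negbTE (sdT _ SD)); move: SD; rewrite memsd.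
  by case: (S \in coll v1); case: (S \in coll v2) => //= _; [left|right].
have eqS S : S \notin symdiff (coll v1) (coll v2) -> v1 S = v2 S.
  rewrite memsd r1 r2; case: (S == setT) => //.
  by case: (S \in coll v1); case: (S \in coll v2).
have linD (c w : game R n) : lin c w = \sum_S c S * w S by [].
split.
- move=> [neq [c Hc]].
  have s1 : segment v1 v2 v1.
    exists 0; first by rewrite lexx ler01.
    by apply/ffunP => S; rewrite ffunE subr0 mul1r mul0r addr0.
  have s2 : segment v1 v2 v2.
    exists 1; first by rewrite lexx ler01.
    by apply/ffunP => S; rewrite ffunE subrr mul1r mul0r add0r.
  have [_ M1] := (Hc v1).1 s1.
  have [_ M2] := (Hc v2).1 s2.
  have E12 : lin c v1 = lin c v2 by apply/le_anti; rewrite M1 ?M2.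
  have uniqD : forall A B, A \in symdiff (coll v1) (coll v2) ->
      B \in symdiff (coll v1) (coll v2) -> A = B.
    move=> A B AD BD; apply/eqP; apply/negPn/negP => AB.
    pose w1 : game R n := [ffun S => if S == A then v2 S else v1 S].
    pose w2 : game R n := [ffun S => if S == A then v1 S else v2 S].
    have Bw (w : game R n) : (forall S, w S = v1 S \/ w S = v2 S) -> BGplus w.
      move=> hw; apply: (mixBG V1 V2 h1 h2).
      - by case: (hw set0) => ->; [case: B1|case: B2].
      - by case: (hw setT) => ->; [case: B1 => _ []|case: B2 => _ []].
      - move=> S; case: (hw S) => ->; [case: (z1 S)|case: (z2 S)] => ->;
          by rewrite ?lexx ?ler01.
      - by move=> S; case: (hw S) => ->; [left|right].
    have Bw1 : BGplus w1.
      by apply: Bw => S; rewrite ffunE; case: (S == A); [right|left].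
    have Bw2 : BGplus w2.
      by apply: Bw => S; rewrite ffunE; case: (S == A); [left|right].
    have Esum : lin c w1 + lin c w2 = lin c v1 + lin c v2.
      rewrite !linD -!big_split /=; apply: eq_bigr => S _; rewrite !ffunE.
      by case: (S == A) => //; rewrite addrC.
    have L1 := M1 _ Bw1; have L2 := M1 _ Bw2.
    have Ew1 : lin c w1 = lin c v1 by lra.
    have Mw1 : forall y, BGplus y -> lin c y <= lin c w1.
      by move=> y By; rewrite Ew1; exact: M1.
    have [t t01 Ht] := (Hc w1).2 (conj Bw1 Mw1).
    have HA := congr1 (fun f : game R n => f A) Ht.
    have HB := congr1 (fun f : game R n => f B) Ht.
    move: HA HB; rewrite !ffunE eqxx eq_sym (negbTE AB) /=.
    case/andP: t01 => t0 t1.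
    by case: (diffA _ AD) => [[-> ->]|[-> ->]]; case: (diffA _ BD) => [[-> ->]|[-> ->]];
      move=> ha hb; clear -ha hb t0 t1; lra.
  have c0 : #|symdiff (coll v1) (coll v2)| != 0%N.
    apply/negP => /eqP /cards0_eq h0; apply: neq; apply/ffunP => S.
    apply: eqS; by rewrite h0 inE.
  have c1 : (#|symdiff (coll v1) (coll v2)| <= 1)%N.
    by apply/card_le1_eqP => A B AD BD; apply: uniqD.
  split; last by move: c0 c1; case: #|_| => // [[]].
  apply/negPn/negP; rewrite negb_or => /andP[/subsetPn [A A1 A2] /subsetPn [B BB2 BB1]].
  have AD : A \in symdiff (coll v1) (coll v2) by rewrite memsd A1 (negbTE A2).
  have BD : B \in symdiff (coll v1) (coll v2) by rewrite memsd BB2 (negbTE BB1).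
  have AB := uniqD A B AD BD.
  by rewrite AB BB2 in A2.
- move=> [_ /eqP /cards1P [A hA]].
  have AD : A \in symdiff (coll v1) (coll v2) by rewrite hA set11.
  have oth S : S != A -> v1 S = v2 S.
    by move=> SA; apply: eqS; rewrite hA inE.
  split.
    move=> e; have := congr1 (fun f : game R n => f A) e => /=.
    by case: (diffA _ AD) => [[-> ->]|[-> ->]] /eqP; rewrite ?oner_eq0 // eq_sym oner_eq0.
  pose c : game R n := [ffun S => if S == A then 0 else 2 * v1 S - 1].
  have term S (y : game R n) : BGplus y -> c S * y S <= c S * v1 S.
    move=> By; have := BG_bounds By S; rewrite ffunE; case: (S == A); rewrite ?mul0r //.
    by case: (z1 S) => -> /andP[y0 y1]; clear -y0 y1; lra.
  have bnd y : BGplus y -> lin c y <= lin c v1.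
    by move=> By; rewrite !linD; apply: ler_sum => S _; apply: term.
  have eqv y : BGplus y -> lin c v1 <= lin c y -> forall S, S != A -> y S = v1 S.
    move=> By le S SA.
    have : \sum_S (c S * v1 S - c S * y S) = 0.
      rewrite sumrB -!linD; apply/eqP; rewrite subr_eq0 eq_le le bnd //.
    move/eqP; rewrite psumr_eq0; last by move=> T _; rewrite subr_ge0 term.
    move/allP => /(_ S (mem_index_enum S)); rewrite subr_eq0 ffunE (negbTE SA).
    have := BG_bounds By S; case: (z1 S) => -> /andP[y0 y1] /eqP h; clear -y0 y1 h; lra.
  exists c => x; split.
  + move=> [t /andP[t0 t1] ->].
    have xe : forall S, [ffun S => (1 - t) * v1 S + t * v2 S] S = v1 S \/ S = A.
      move=> S; rewrite ffunE; case: (boolP (S == A)) => [/eqP|SA]; [by right|left].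
      by rewrite -(oth _ SA); ring.
    split.
      apply: (mixBG V1 V2 h1 h2).
      - rewrite ffunE; case: B1 => -> _; case: B2 => -> _; ring.
      - rewrite ffunE; case: B1 => _ [-> _]; case: B2 => _ [-> _]; ring.
      - by move=> S; rewrite ffunE; case: (z1 S) => ->; case: (z2 S) => ->; apply/andP; split; clear -t0 t1; lra.
      - move=> S; rewrite ffunE; case: (z1 S) => ->; case: (z2 S) => -> h;
          first [by left; rewrite ltr01 | by right; rewrite ltr01 | exfalso; clear -h; lra].
    move=> y By; apply: le_trans (bnd _ By) _; rewrite !linD le_eqVlt; apply/orP; left.
    apply/eqP; apply: eq_bigr => S _.
    case: (xe S) => [-> //|->]; by rewrite [c A]ffunE eqxx !mul0r.
  + move=> [Bx Mx].
    have xv := eqv x Bx (Mx _ B1).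
    have := BG_bounds Bx A => /andP[x0 x1].
    case: (diffA _ AD) => [[a1 a2]|[a1 a2]].
      exists (1 - x A); first by apply/andP; split; clear -x0 x1; lra.
      apply/ffunP => S; rewrite ffunE; case: (boolP (S == A)) => [/eqP ->|SA].
        rewrite a1 a2; ring.
      by rewrite -(oth _ SA) (xv _ SA); ring.
    exists (x A); first by apply/andP; split; clear -x0 x1; lra.
    apply/ffunP => S; rewrite ffunE; case: (boolP (S == A)) => [/eqP ->|SA].
      rewrite a1 a2; ring.
    by rewrite -(oth _ SA) (xv _ SA); ring.
Qed.
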